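(* For every expression $e\in\mathrm{Exp}$, the set $\langle e\rangle_\partial$ of states reachable from $e$ in the derivative automaton $(\mathrm{Exp},\partial)$ is finite, and $|\langle e\rangle_\partial|\le \#(e)$, where $\#:\mathrm{Exp}\to\mathbb N$ is defined by $\#(b)=1$, $\#(v)=1$, $\#(p)=2$, $\#(e\oplus_{r,s}f)=\#(e)+\#(f)$, $\#(e+_bf)=\#(e)+\#(f)$, $\#(e;f)=\#(e)+\#(f)$, $\#(e^{(b)})=\#(e)$.
   Context: Fix a finite set $T$ of primitive tests, a set $\mathrm{Act}$ of atomic actions, a set $\mathrm{Out}$ of return values, and a semiring $(S,+,\cdot,0,1)$ that is positive ($x+y=0\Rightarrow x=y=0$), refinement (whenever $x+y=z+w$ there exist $s,t,u,v\in S$ with $s+t=x$, $s+u=z$, $u+v=y$, $t+v=w$) and Conway (equipped with an operation ${}^*:S\to S$ with $(a+b)^*=a^*(ba^* )^*$ and $(ab)^*=1+a(ba)^*b$ for all $a,b$). Tests: $b,c\in\mathrm{BExp}::=\mathtt{0}\mid\mathtt{1}\mid t\ (t\in T)\mid\bar b\mid b+c\mid bc$ (false, true, negation, disjunction, conjunction; $\mathtt 0,\mathtt 1$ are distinct from the semiring elements $0,1$). $\mathrm{At}$ is the finite set of atoms (minimal nonzero elements of the free Boolean algebra on $T$, i.e. of $\mathrm{BExp}$ modulo Boolean equivalence); atoms are also regarded as tests; $\alpha\le b$ means $\alpha$ entails $b$. Expressions: $e,f\in\mathrm{Exp}::= p\ (p\in\mathrm{Act})\mid b\ (b\in\mathrm{BExp})\mid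 e+_b f\mid e;f\mid e^{(b)}\mid v\ (v\in\mathrm{Out})\mid e\oplus_{r,s} f\ (r,s\in S)$ (if-then-else, sequencing, while loop, return, weighted choice). For a set $X$, $\mathcal M_\omega(X)$ is the set of finitely supported maps $X\to S$ with pointwise sum and scalar multiplication; $\delta_x$ sends $x$ to $1$ and all else to $0$. The derivative automaton has transition map $\partial:\mathrm{Exp}\to\mathcal M_\omega(\{\mathsf{acc},\mathsf{rej}\}+\mathrm{Out}+\mathrm{Act}\times\mathrm{Exp})^{\mathrm{At}}$, written $\partial(e)_\alpha$, defined by: $\partial(b)_\alpha=\delta_{\mathsf{acc}}$ if $\alpha\le b$ and $\delta_{\mathsf{rej}}$ otherwise; $\partial(v)_\alpha=\delta_v$; $\partial(p)_\alpha=\delta_{(p,\mathtt 1)}$; $\partial(e+_bf)_\alpha=\partial(e)_\alpha$ if $\alpha\le b$ and $\partial(f)_\alpha$ otherwise; $\partial(e\oplus_{r,s}f)_\alpha=r\,\partial(e)_\alpha+s\,\partial(f)_\alpha$; $\partial(e;f)_\alpha=\sum_x\partial(e)_\alpha(x)\,c_{\alpha,f}(x)$ where $c_{\alpha,f}(\mathsf{acc})=\partial(f)_\alpha$, $c_{\alpha,f}(x)=\delta_x$ for $x\in\{\mathsf{rej}\}\cup\mathrm{Out}$, $c_{\alpha,f}(p,e')=\delta_{(p,e';f)}$; and $\partial(e^{(b)})_\alpha(x)$ equals $1$ if $x=\mathsf{acc}$ and $\alpha\le\bar b$; $\partial(e)_\alpha(\mathsf{acc})^*\partial(e)_\alpha(x)$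 if $x\in\{\mathsf{rej}\}\cup\mathrm{Out}$ and $\alpha\le b$; $\partial(e)_\alpha(\mathsf{acc})^*\partial(e)_\alpha(p,e')$ if $x=(p,e';e^{(b)})$ and $\alpha\le b$; and $0$ otherwise. $\langle e\rangle_\partial$ is the smallest set containing $e$ and containing $g'$ whenever it contains $g$ and $\partial(g)_\alpha(p,g')\neq 0$ for some $\alpha,p$. *)

(* Defs.v *)
From mathcomp Require Import all_boot all_algebra.
From Stdlib Require Import ClassicalEpsilon List.
Set Implicit Arguments. Unset Strict Implicit. Unset Printing Implicit Defensive.
Import GRing.Theory.
Local Open Scope ring_scope.

Definition positive_sr (S : pzSemiRingType) : Prop :=
  forall x y : S, x + y = 0 -> x = 0 /\ y = 0.

Definition refinement_sr (S : pzSemiRingType) : Prop :=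
  forall x y z w : S, x + y = z + w ->
    exists s t u v : S, [/\ s + t = x, s + u = z, u + v = y & t + v = w].

Definition conway_sr (S : pzSemiRingType) (star : S -> S) : Prop :=
  (forall a b : S, star (a + b) = star a * star (b * star a)) /\
  (forall a b : S, star (a * b) = 1 + a * star (b * a) * b).

Inductive BExp (T : Type) : Type :=
| BFalse | BTrue | BPrim of T | BNeg of BExp T
| BOr of BExp T & BExp T | BAnd of BExp T & BExp T.
Arguments BFalse {T}. Arguments BTrue {T}.

(* Atoms of the free Boolean algebra on a finite T are identified with
   valuations T -> bool; alpha <= b iff b evaluates to true under alpha. *)
Definition atom (T : finType) := {ffun T -> bool}.

Fixpoint beval (T : finType) (a : atom T) (b : BExp T) : bool :=
  match b with
  | BFalse => false
  | BTrue => true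
  | BPrim t => a t
  | BNeg c => ~~ beval a c
  | BOr c d => beval a c || beval a d
  | BAnd c d => beval a c && beval a d
  end.

Definition atom_le (T : finType) (a : atom T) (b : BExp T) : Prop := beval a b.

Inductive Exp (T : finType) (Act Out : Type) (S : pzSemiRingType) : Type :=
| EAct of Act
| ETest of BExp T
| EIf of Exp T Act Out S & BExp T & Exp T Act Out S
| ESeq of Exp T Act Out S & Exp T Act Out S
| ELoop of Exp T Act Out S & BExp T
| ERet of Out
| EChoice of Exp T Act Out S & S & S & Exp T Act Out S.

Arguments EAct {T Act Out S}. Arguments ETest {T Act Out S}. Arguments ERet {T Act Out S}.

Fixpoint expsize T Act Out S (e : @Exp T Act Out S) : nat :=
  match e with
  | EAct _ => 2
  | ETest _ => 1
  | ERet _ => 1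
  | EIf e b f => expsize e + expsize f
  | ESeq e f => expsize e + expsize f
  | ELoop e b => expsize e
  | EChoice e r s f => expsize e + expsize f
  end.

Inductive Lab (Act Out E : Type) : Type :=
| Acc | Rej | LOut of Out | LTr of Act & E.
Arguments Acc {Act Out E}. Arguments Rej {Act Out E}.
Arguments LOut {Act Out E}. Arguments LTr {Act Out E}.

(* elements of M_w(X) are represented pointwise as maps X -> S
   (every map produced below is finitely supported). *)
Definition dec (P : Prop) : bool := if excluded_middle_informative P then true else false.

Section Deriv.
Variables (T : finType) (Act Out : Type) (S : pzSemiRingType) (star : S -> S).
Local Notation Exp := (@Exp T Act Out S).
Local Notation X := (Lab Act Out Exp).

Fixpoint deriv (e : Exp) (a : atom T) (x : X) {struct e} : S :=
  match e with
  | ETest b => match x with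
               | Acc => if beval a b then 1 else 0
               | Rej => if beval a b then 0 else 1
               | _ => 0 end
  | ERet v => match x with LOut w => if dec (w = v) then 1 else 0 | _ => 0 end
  | EAct p => match x with
              | LTr q g => if dec (q = p /\ g = ETest BTrue) then 1 else 0
              | _ => 0 end
  | EIf e b f => if beval a b then deriv e a x else deriv f a x
  | EChoice e r s f => r * deriv e a x + s * deriv f a x
  | ESeq e f =>
      (* sum_y d(e)(y) * c_{a,f}(y)(x) *)
      deriv e a Acc * deriv f a x +
      match x with
      | Acc => 0
      | Rej => deriv e a Rej
      | LOut v => deriv e a (LOut v)
      | LTr p g => match g with
                   | ESeq e' f' => if dec (f' = f) then deriv e a (LTr p e') else 0
                   | _ => 0 end
      end
  | ELoop e b =>
      match x with
      | Acc => if beval a (BNeg b) then 1 else 0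
      | Rej => if beval a b then star (deriv e a Acc) * deriv e a Rej else 0
      | LOut v => if beval a b then star (deriv e a Acc) * deriv e a (LOut v) else 0
      | LTr p g => match g with
                   | ESeq e' l => if beval a b && dec (l = ELoop e b)
                                  then star (deriv e a Acc) * deriv e a (LTr p e')
                                  else 0
                   | _ => 0 end
      end
  end.

Inductive reach (e : Exp) : Exp -> Prop :=
| reach_refl : reach e e
| reach_step g (a : atom T) (p : Act) g' :
    reach e g -> deriv g a (LTr p g') <> 0 -> reach e g'.
End Deriv.

(* Main.v *)
Require Import Defs.
From mathcomp Require Import all_boot all_algebra.
From Stdlib Require Import List Classical ClassicalEpsilon Lia.
From mathcomp Require Import zify.
Import GRing.Theory.
Local Open Scope ring_scope.

Section Proof.
Variables (T : finType) (Act Out : Type) (SR : pzSemiRingType) (star : SR -> SR).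
Local Notation E := (@Exp T Act Out SR).

Fixpoint DD (e : E) : list E :=
  match e with
  | EAct _ => cons (ETest BTrue) nil
  | ETest _ => nil
  | ERet _ => nil
  | EIf e b f => DD e ++ DD f
  | EChoice e r s f => DD e ++ DD f
  | ESeq e f => List.map (fun x => ESeq x f) (DD e) ++ DD f
  | ELoop e b => List.map (fun x => ESeq x (ELoop e b)) (DD e)
  end.

Lemma DD_size e : ((length (DD e)).+1 <= expsize e)%coq_nat.
Proof.
induction e; simpl; rewrite ?length_app ?length_map; simpl; lia.
Qed.

Lemma dec_true (P : Prop) : dec P = true -> P.
Proof. unfold dec; destruct (excluded_middle_informative P); [auto|discriminate]. Qed.

Lemma sum_nz (x y : SR) : x + y <> 0 -> x <> 0 \/ y <> 0.
Proof.
intros H; destruct (classic (x = 0)) as [Hx|Hx]; auto.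
right; intros Hy; apply H; rewrite Hx Hy addr0; reflexivity.
Qed.

Lemma mul_nz (x y : SR) : x * y <> 0 -> y <> 0.
Proof. intros H Hy; apply H; rewrite Hy mulr0; reflexivity. Qed.

Lemma mul_nzl (x y : SR) : x * y <> 0 -> x <> 0.
Proof. intros H Hx; apply H; rewrite Hx mul0r; reflexivity. Qed.

Lemma DD_closed e :
  (forall a p g', Defs.deriv star e a (LTr p g') <> 0 -> In g' (DD e)) /\
  (forall g a p g', In g (DD e) -> Defs.deriv star g a (LTr p g') <> 0 -> In g' (DD e)).
Proof.
induction e as [q|b|e1 IH1 b e2 IH2|e1 IH1 e2 IH2|e1 IH1 b|v|e1 IH1 r s e2 IH2].
- split.
  + intros a p g' H; simpl in H.
    destruct (dec (p = q /\ g' = ETest BTrue)) eqn:Hd; [|congruence].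
    apply dec_true in Hd; destruct Hd as [_ ->]; simpl; auto.
  + intros g a p g' Hin H; simpl in Hin; destruct Hin as [<-|[]].
    simpl in H; congruence.
- split; [intros a p g' H; simpl in H; congruence | intros g a p g' []].
- destruct IH1 as [A1 B1], IH2 as [A2 B2]; split.
  + intros a p g' H; simpl in H; simpl; apply in_or_app.
    destruct (beval a b); [left; eauto | right; eauto].
  + intros g a p g' Hin H; simpl in *; apply in_or_app.
    apply in_app_or in Hin; destruct Hin; [left|right]; eauto.
- destruct IH1 as [A1 B1], IH2 as [A2 B2].
  assert (A : forall a p g', Defs.deriv star (ESeq e1 e2) a (LTr p g') <> 0 ->
            In g' (DD (ESeq e1 e2))).
  { intros a p g' H; simpl in H; simpl; apply in_or_app.
    apply sum_nz in H; destruct H as [H|H].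
    - right; eapply A2; eapply mul_nz; exact H.
    - destruct g'; try congruence.
      destruct (dec (g'2 = e2)) eqn:Hd; [|congruence].
      apply dec_true in Hd; subst; left.
      apply (in_map (fun x => ESeq x e2)); eauto. }
  split; [exact A|].
  intros g a p g' Hin H; simpl in Hin; apply in_app_or in Hin.
  destruct Hin as [Hin|Hin].
  + apply in_map_iff in Hin; destruct Hin as [e0 [<- He0]].
    simpl in H; simpl; apply in_or_app.
    apply sum_nz in H; destruct H as [H|H].
    * right; eapply A2; eapply mul_nz; exact H.
    * destruct g'; try congruence.
      destruct (dec (g'2 = e2)) eqn:Hd; [|congruence].
      apply dec_true in Hd; subst; left.
      apply (in_map (fun x => ESeq x e2)); eauto.
  + simpl; apply in_or_app; right; eauto.
- destruct IH1 as [A1 B1].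
  assert (A : forall a p g', Defs.deriv star (ELoop e1 b) a (LTr p g') <> 0 ->
            In g' (DD (ELoop e1 b))).
  { intros a p g' H; simpl in H; simpl.
    destruct g'; try congruence.
    destruct (beval a b && dec (g'2 = ELoop e1 b)) eqn:Hd; [|congruence].
    move/andP: Hd => [_ Hd]; apply dec_true in Hd; subst.
    apply (in_map (fun x => ESeq x (ELoop e1 b))); eapply A1; eapply mul_nz; exact H. }
  split; [exact A|].
  intros g a p g' Hin H; simpl in Hin.
  apply in_map_iff in Hin; destruct Hin as [e0 [<- He0]].
  simpl in H.
  apply sum_nz in H; destruct H as [H|H].
  + apply (A a p); eapply mul_nz; exact H.
  + destruct g'; try congruence.
    destruct (dec (g'2 = ELoop e1 b)) eqn:Hd; [|congruence].
    apply dec_true in Hd; subst; simpl.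
    apply (in_map (fun x => ESeq x (ELoop e1 b))); eauto.
- split; [intros a p g' H; simpl in H; congruence | intros g a p g' []].
- destruct IH1 as [A1 B1], IH2 as [A2 B2]; split.
  + intros a p g' H; simpl in H; simpl; apply in_or_app.
    apply sum_nz in H; destruct H as [H|H]; [left|right]; eauto using mul_nz.
  + intros g a p g' Hin H; simpl in *; apply in_or_app.
    apply in_app_or in Hin; destruct Hin; [left|right]; eauto.
Qed.

Lemma reach_sub e g : reach star e g -> g = e \/ In g (DD e).
Proof.
induction 1 as [|g a p g' _ IH H]; auto.
right; destruct IH as [->|Hin].
- eapply (proj1 (DD_closed e)); eauto.
- eapply (proj2 (DD_closed e)); eauto.
Qed.

Lemma filter_ex (P : E -> Prop) (L : list E) :
  (forall g, P g -> In g L) ->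
  exists l, NoDup l /\ (forall g, P g <-> In g l) /\ (length l <= length L)%coq_nat.
Proof.
revert P; induction L as [|x L IH]; intros P HP.
- exists nil; split; [constructor|split; [|simpl; lia]].
  intros g; split; [intros H; exact (HP g H)|intros []].
- destruct (IH (fun g => P g /\ g <> x)) as [l [Hnd [Hiff Hlen]]].
  { intros g [Hg Hne]; destruct (HP g Hg); [congruence|auto]. }
  destruct (classic (P x)) as [Px|nPx].
  + exists (x :: l); split; [|split].
    * constructor; auto. intros Hin; apply Hiff in Hin; tauto.
    * intros g; split.
      -- intros Hg; destruct (classic (g = x)) as [->|Hne]; [left; auto|right; apply Hiff; auto].
      -- intros [<-|Hin]; [auto|apply Hiff in Hin; tauto].
    * simpl; lia.
  + exists l; split; [auto|split].
    * intros g; split.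
      -- intros Hg; apply Hiff; split; auto; intros ->; auto.
      -- intros Hin; apply Hiff in Hin; tauto.
    * simpl; lia.
Qed.

End Proof.
Arguments DD {T Act Out SR}.

Theorem mainTheorem1 (T : finType) (Act Out : Type) (S : pzSemiRingType)
  (star : S -> S)
  (Hpos : positive_sr S) (Href : refinement_sr S) (Hconw : conway_sr star)
  (e : Exp T Act Out S) :
  exists l : list (Exp T Act Out S),
    List.NoDup l /\
    (forall g, reach star e g <-> List.In g l) /\
    (length l <= expsize e)%N.
Proof.
destruct (@filter_ex _ _ _ _ (fun g => reach star e g) (e :: DD e)) as [l [H1 [H2 H3]]].
{ intros g Hg; destruct (@reach_sub _ _ _ _ star e g Hg) as [->|Hin]; [left; auto|right; auto]. }
exists l; split; [auto|split; [auto|]].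
apply/leP; pose proof (@DD_size T Act Out S e); simpl in H3; lia.
Qed.
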